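(* Let $H\ge 1$ and $m\ge 1$ be integers and let $V_0\in\mathbb{R}^{|\mathcal S|}$ be arbitrary. Consider the iteration (generalized policy iteration with lookahead): for $k=0,1,2,\dots$, let $(\mu_{k+1},\nu_{k+1})$ be an $H$-step lookahead policy pair for $V_k$, i.e. a pair of stationary randomized policies satisfying $T_{\mu_{k+1},\nu_{k+1}}(T^{H-1}V_k)=T^{H}V_k$, and set $$V_{k+1}=T_{\mu_{k+1},\nu_{k+1}}^{m}\,T^{H-1}V_k .$$ Then for every $k\ge 0$, $$\|V_k-J^*\|_\infty\le\Big(\alpha^{H-1}+(1+\alpha^m)\frac{\alpha^{H-1}}{1-\alpha}(1+\alpha)\Big)^k\|V_0-J^*\|_\infty .$$ In particular, if $H$ and $m$ satisfy $\alpha^{H-1}+2(1+\alpha^m)\frac{\alpha^{H-1}}{1-\alpha}<1$, then $V_k\to J^*$ exponentially fast.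
   Context: A two-player zero-sum discounted Markov game has a finite state space $\mathcal S$, finite action sets $\mathcal U(s)$ (maximizer) and $\mathcal V(s)$ (minimizer) at each state $s$, transition probabilities $P(s'|s,u,v)$, reward $g(s,u,v)\in[0,1]$, and discount factor $\alpha\in(0,1)$. A (stationary randomized) policy pair $(\mu,\nu)$ assigns to each $s$ distributions $\mu(s)\in\Delta(\mathcal U(s))$, $\nu(s)\in\Delta(\mathcal V(s))$. For $V\in\mathbb{R}^{|\mathcal S|}$ and $s\in\mathcal S$ let $A_{V,s}\in\mathbb{R}^{|\mathcal U(s)|\times|\mathcal V(s)|}$ be $A_{V,s}(u,v)=g(s,u,v)+\alpha\sum_{s'}P(s'|s,u,v)V(s')$. Define $T_{\mu,\nu}V(s)=\mu(s)^\top A_{V,s}\nu(s)$ and the Bellman operator $TV(s)=\max_{p\in\Delta(\mathcal U(s))}\min_{q\in\Delta(\mathcal V(s))}p^\top A_{V,s}q$. $J^{\mu,\nu}$ denotes the unique fixed point of $T_{\mu,\nu}$ (the expected discounted reward of $(\mu,\nu)$), and $J^*$ denotes the unique fixed point of $T$ (the Nash equilibrium value of the game). $T^j$ and $T_{\mu,\nu}^j$ denote $j$-fold compositions, $T^0$ is the identity. *)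

(* Defs.v *)
From HB Require Import structures.
From mathcomp Require Import all_boot all_order all_algebra.
From mathcomp Require Import classical_sets reals.
Set Implicit Arguments. Unset Strict Implicit. Unset Printing Implicit Defensive.
Import Order.TTheory GRing.Theory Num.Theory.
Local Open Scope ring_scope.
Local Open Scope classical_set_scope.

Section Game.
Variables (R : realType) (S : finType) (nU nV : S -> nat).
(* actions at state s: 'I_(nU s) (maximizer), 'I_(nV s) (minimizer) *)
Variables (g : forall s, 'I_(nU s) -> 'I_(nV s) -> R)
          (P : forall s, 'I_(nU s) -> 'I_(nV s) -> S -> R) (alpha : R).

Definition is_dist (n : nat) (p : 'I_n -> R) : Prop :=
  (forall i, 0 <= p i) /\ \sum_(i < n) p i = 1.

Definition is_policyU (mu : forall s, 'I_(nU s) -> R) : Prop :=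
  forall s, is_dist (mu s).
Definition is_policyV (nu : forall s, 'I_(nV s) -> R) : Prop :=
  forall s, is_dist (nu s).

Definition Amat (W : S -> R) (s : S) (u : 'I_(nU s)) (v : 'I_(nV s)) : R :=
  @g s u v + alpha * \sum_(s' : S) @P s u v s' * W s'.

Definition bilin (m n : nat) (p : 'I_m -> R) (M : 'I_m -> 'I_n -> R)
  (q : 'I_n -> R) : R :=
  \sum_(u < m) \sum_(v < n) p u * M u v * q v.

Definition Tpol (mu : forall s, 'I_(nU s) -> R) (nu : forall s, 'I_(nV s) -> R)
  (W : S -> R) : S -> R :=
  fun s => bilin (mu s) (@Amat W s) (nu s).

(* value of the matrix game max_p min_q p^T M q (sup/inf are attained) *)
Definition game_value (m n : nat) (M : 'I_m -> 'I_n -> R) : R :=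
  sup [set x | exists p : 'I_m -> R, is_dist p /\
        x = inf [set y | exists q : 'I_n -> R, is_dist q /\ y = bilin p M q]].

Definition Tbell (W : S -> R) : S -> R :=
  fun s => game_value (@Amat W s).

End Game.

Definition supnorm (R : realType) (S : finType) (W : S -> R) : R :=
  \big[Num.max/0]_(s : S) `|W s|.

(* Main.v *)
Require Import Defs.
From HB Require Import structures.
From mathcomp Require Import all_boot all_order all_algebra.
From mathcomp Require Import classical_sets reals.
From mathcomp Require Import ring lra.
Import Order.TTheory GRing.Theory Num.Theory.
Local Open Scope ring_scope.
Local Open Scope classical_set_scope.
Section Aux.
Variable R : realType.
Set Implicit Arguments. Unset Strict Implicit.

Lemma dist_ex n (hn : (0 < n)%N) : exists p : 'I_n -> R, is_dist p.
Proof.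
exists (fun i => ((i == Ordinal hn)%:R : R)); split=> [i|]; first by rewrite ler0n.
rewrite (bigD1 (Ordinal hn)) //= ?eqxx big1 ?addr0 // => i /negPf -> //.
Qed.

Lemma dist_le1 n (p : 'I_n -> R) : is_dist p -> forall i, p i <= 1.
Proof.
move=> [h0 h1] i; rewrite -h1 (bigD1 i) //= lerDl.
by apply: sumr_ge0 => j _; apply: h0.
Qed.

Lemma bilin_shift m n (p : 'I_m -> R) (q : 'I_n -> R) M d :
  is_dist p -> is_dist q ->
  bilin p (fun u v => M u v + d) q = bilin p M q + d.
Proof.
move=> [_ hp] [_ hq]; rewrite /bilin.
have -> : \sum_(u < m) \sum_(v < n) p u * (M u v + d) * q v =
   \sum_(u < m) (\sum_(v < n) p u * M u v * q v + p u * d).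
  apply: eq_bigr => u _; rewrite -[p u * d]mulr1 -hq mulr_sumr -big_split /=.
  by apply: eq_bigr => v _; rewrite mulrDr mulrDl.
by rewrite big_split /= -mulr_suml hp mul1r.
Qed.

Lemma bilin_le m n (p : 'I_m -> R) (q : 'I_n -> R) M M' d :
  is_dist p -> is_dist q -> (forall u v, M u v <= M' u v + d) ->
  bilin p M q <= bilin p M' q + d.
Proof.
move=> hp hq hM; rewrite -bilin_shift //; apply: ler_sum => u _; apply: ler_sum => v _.
apply: ler_wpM2r; first by case: hq.
apply: ler_wpM2l; first by case: hp.
exact: hM.
Qed.

Lemma bilin_abs m n (p : 'I_m -> R) (q : 'I_n -> R) M :
  is_dist p -> is_dist q -> `|bilin p M q| <= \sum_u \sum_v `|M u v|.
Proof.
move=> hp hq; apply: le_trans (ler_norm_sum _ _ _) _; apply: ler_sum => u _.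
apply: le_trans (ler_norm_sum _ _ _) _; apply: ler_sum => v _.
rewrite !normrM (ger0_norm (proj1 hp u)) (ger0_norm (proj1 hq v)).
rewrite -[X in _ <= X]mul1r -[X in _ <= X]mulr1; apply: ler_pM => //.
- by apply: mulr_ge0 => //; case: hp.
- by case: hq.
- by apply: ler_wpM2r => //; apply: (dist_le1 hp).
- exact: (dist_le1 hq).
Qed.

Lemma bilin_ge m n (p : 'I_m -> R) (q : 'I_n -> R) M :
  is_dist p -> is_dist q -> - (\sum_u \sum_v `|M u v|) <= bilin p M q.
Proof. by move=> hp hq; rewrite lerNl; apply: le_trans (ler_norm _) _; rewrite normrN; apply: bilin_abs. Qed.

Lemma bilin_le' m n (p : 'I_m -> R) (q : 'I_n -> R) M :
  is_dist p -> is_dist q -> bilin p M q <= \sum_u \sum_v `|M u v|.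
Proof. by move=> hp hq; apply: le_trans (ler_norm _) (bilin_abs _ hp hq). Qed.

Lemma gv_le m n M M' d : (0 < m)%N -> (0 < n)%N ->
  (forall u v, M u v <= M' u v + d) -> @game_value R m n M <= game_value M' + d.
Proof.
move=> hm hn hM; rewrite /game_value.
set Y := fun (N : 'I_m -> 'I_n -> R) p => [set y | exists q : 'I_n -> R, is_dist q /\ y = bilin p N q].
have Yne : forall N p, Y N p !=set0.
  by move=> N p; have [q hq] := dist_ex hn; exists (bilin p N q), q.
have Ylb : forall N p, is_dist p -> has_lbound (Y N p).
  by move=> N p hp; exists (- (\sum_u \sum_v `|N u v|)) => y [q [hq ->]]; apply: bilin_ge.
have key : forall p, is_dist p -> inf (Y M p) <= inf (Y M' p) + d.
  move=> p hp; rewrite -lerBlDr; apply: lb_le_inf => // y [q [hq ->]].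
  rewrite lerBlDr; have HH := bilin_le hp hq hM. About le_trans. refine (le_trans _ HH).
  by apply: ge_inf; [apply: Ylb | exists q].
rewrite -/(Y M) -/(Y M').
apply: ge_sup.
  by have [p hp] := dist_ex hm; exists (inf (Y M p)), p.
move=> x [p [hp ->]]; apply: le_trans (key p hp) _; rewrite lerD2r.
apply: ub_le_sup; last by exists p.
have [q hq] := dist_ex hn.
exists (\sum_u \sum_v `|M' u v|) => y [p' [hp' ->]].
have h1 : inf (Y M' p') <= bilin p' M' q by apply: ge_inf; [apply: Ylb | exists q].
exact: (le_trans h1 (bilin_le' _ hp' hq)).
Qed.

Lemma sn_ge0 (S : finType) (f : S -> R) : 0 <= supnorm f.
Proof.
rewrite /supnorm; elim/big_ind: _ => //.
by move=> x y hx hy; rewrite le_max hx.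
Qed.

Lemma sn_ub (S : finType) (f : S -> R) s : `|f s| <= supnorm f.
Proof. by rewrite /supnorm (bigD1 s) //= le_max lexx. Qed.

Lemma sn_le (S : finType) (f : S -> R) c : 0 <= c -> (forall s, `|f s| <= c) ->
  supnorm f <= c.
Proof.
move=> hc hf; rewrite /supnorm; elim/big_ind: _ => //.
by move=> x y hx hy; rewrite ge_max hx.
Qed.

Lemma sn_sym (S : finType) (f h : S -> R) :
  supnorm (fun s => f s - h s) = supnorm (fun s => h s - f s).
Proof. by rewrite /supnorm; apply: eq_bigr => s _; rewrite distrC. Qed.

Lemma sn_tri (S : finType) (f g h : S -> R) :
  supnorm (fun s => f s - h s) <=
  supnorm (fun s => f s - g s) + supnorm (fun s => g s - h s).
Proof.
apply: sn_le; first by rewrite addr_ge0 // sn_ge0.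
move=> s; have -> : f s - h s = (f s - g s) + (g s - h s) by ring.
apply: le_trans (ler_normD _ _) _.
by apply: lerD; [apply: (sn_ub (fun s => f s - g s)) | apply: (sn_ub (fun s => g s - h s))].
Qed.

Lemma contr (S : finType) (F : (S -> R) -> S -> R) a : 0 <= a ->
  (forall W W' s, F W s <= F W' s + a * supnorm (fun s => W s - W' s)) ->
  forall W W', supnorm (fun s => F W s - F W' s) <= a * supnorm (fun s => W s - W' s).
Proof.
move=> ha hF W W'; apply: sn_le; first by rewrite mulr_ge0 // sn_ge0.
move=> s; rewrite ler_norml; apply/andP; split.
  by have := hF W' W s; rewrite sn_sym; lra.
by have := hF W W' s; lra.
Qed.

Lemma contr_iter (S : finType) (F : (S -> R) -> S -> R) a : 0 <= a ->
  (forall W W', supnorm (fun s => F W s - F W' s) <= a * supnorm (fun s => W s - W' s)) ->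
  forall j W W', supnorm (fun s => iter j F W s - iter j F W' s)
     <= a ^+ j * supnorm (fun s => W s - W' s).
Proof.
move=> ha hF; elim=> [|j IH] W W' /=; first by rewrite expr0 mul1r.
apply: le_trans (hF _ _) _; rewrite exprS -mulrA; apply: ler_wpM2l => //.
Qed.
End Aux.
Unset Implicit Arguments. Set Strict Implicit.

Section Game.
Variables (R : realType) (S : finType) (nU nV : S -> nat).
Variables (g : forall s, 'I_(nU s) -> 'I_(nV s) -> R)
          (P : forall s, 'I_(nU s) -> 'I_(nV s) -> S -> R) (alpha : R).
Hypotheses (hnU : forall s, (0 < nU s)%N) (hnV : forall s, (0 < nV s)%N)
  (hP0 : forall s u v s', 0 <= P s u v s')
  (hP1 : forall s u v, \sum_(s' : S) P s u v s' = 1) (ha0 : 0 <= alpha).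

Lemma Amat_le (W W' : S -> R) (s : S) (u : 'I_(nU s)) (v : 'I_(nV s)) :
  Amat g P alpha W u v <= Amat g P alpha W' u v + alpha * supnorm (fun s => W s - W' s).
Proof.
rewrite /Amat -addrA lerD2l -mulrDr; apply: ler_wpM2l => //.
set c := supnorm _.
rewrite -[c]mul1r -(hP1 s u v) mulr_suml -big_split /=; apply: ler_sum => s' _.
rewrite -mulrDr; apply: ler_wpM2l => //.
rewrite -lerBlDl; apply: le_trans (ler_norm _) _.
exact: (sn_ub (fun s => W s - W' s)).
Qed.

Lemma Tpol_lip mu nu : is_policyU mu -> is_policyV nu ->
  forall W W' s, Tpol g P alpha mu nu W s <= Tpol g P alpha mu nu W' s
     + alpha * supnorm (fun s => W s - W' s).
Proof. by move=> hmu hnu W W' s; apply: bilin_le => // u v; apply: Amat_le. Qed.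

Lemma Tbell_lip W W' s : Tbell g P alpha W s <= Tbell g P alpha W' s
     + alpha * supnorm (fun s => W s - W' s).
Proof. by apply: gv_le => // u v; apply: Amat_le. Qed.

End Game.

Local Close Scope classical_set_scope.
Theorem theorem1 (R : realType) (S : finType) (nU nV : S -> nat)
  (g : forall s, 'I_(nU s) -> 'I_(nV s) -> R)
  (P : forall s, 'I_(nU s) -> 'I_(nV s) -> S -> R) (alpha : R)
  (hnU : forall s, (0 < nU s)%N) (hnV : forall s, (0 < nV s)%N)
  (hg : forall s u v, 0 <= g s u v <= 1)
  (hP0 : forall s u v s', 0 <= P s u v s')
  (hP1 : forall s u v, \sum_(s' : S) P s u v s' = 1)
  (halpha : 0 < alpha < 1)
  (Jstar : S -> R) (hJstar : Tbell g P alpha Jstar = Jstar)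
  (H m : nat) (hH : (1 <= H)%N) (hm : (1 <= m)%N)
  (mu : nat -> forall s, 'I_(nU s) -> R) (nu : nat -> forall s, 'I_(nV s) -> R)
  (Vs : nat -> S -> R)
  (hmu : forall k, is_policyU (mu k.+1)) (hnu : forall k, is_policyV (nu k.+1))
  (hlook : forall k,
     Tpol g P alpha (mu k.+1) (nu k.+1) (iter H.-1 (Tbell g P alpha) (Vs k))
     = iter H (Tbell g P alpha) (Vs k))
  (hV : forall k,
     Vs k.+1 = iter m (Tpol g P alpha (mu k.+1) (nu k.+1))
                 (iter H.-1 (Tbell g P alpha) (Vs k))) :
  (forall k : nat,
     supnorm (fun s => Vs k s - Jstar s)
     <= (alpha ^+ H.-1 + (1 + alpha ^+ m) * (alpha ^+ H.-1 / (1 - alpha)) * (1 + alpha)) ^+ k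
        * supnorm (fun s => Vs 0%N s - Jstar s))
  /\
  (alpha ^+ H.-1 + 2 * (1 + alpha ^+ m) * (alpha ^+ H.-1 / (1 - alpha)) < 1 ->
     exists rho : R, 0 <= rho < 1 /\
       forall k : nat, supnorm (fun s => Vs k s - Jstar s)
                       <= rho ^+ k * supnorm (fun s => Vs 0%N s - Jstar s)).
Proof.
case/andP: halpha => ha0 ha1.
have ha0' : 0 <= alpha by apply: ltW.
set T := Tbell g P alpha.
set a := alpha ^+ H.-1.
set c := a + (1 + alpha ^+ m) * (a / (1 - alpha)) * (1 + alpha).
have h1a : 0 < 1 - alpha by rewrite subr_gt0.
have hTc := contr ha0' (@Tbell_lip R S nU nV g P alpha hnU hnV hP0 hP1 ha0').
have hTfix : forall j, iter j T Jstar = Jstar.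
  by elim=> [|j IH] //=; rewrite IH.
have ha : 0 <= a by rewrite exprn_ge0.
have hb : 0 <= a / (1 - alpha) by rewrite divr_ge0 // ltW.
have hx : 0 <= alpha ^+ m by rewrite exprn_ge0.
have hc : 0 <= c.
  by apply: addr_ge0 => //; apply: mulr_ge0; [apply: mulr_ge0 => //; apply: addr_ge0 | apply: addr_ge0].
have step : forall k, supnorm (fun s => Vs k.+1 s - Jstar s)
                      <= c * supnorm (fun s => Vs k s - Jstar s).
  move=> k.
  set e := supnorm (fun s => Vs k s - Jstar s).
  set W := iter H.-1 T (Vs k).
  set Tm := Tpol g P alpha (mu k.+1) (nu k.+1).
  have hTm := contr ha0' (@Tpol_lip R S nU nV g P alpha hP0 hP1 ha0' _ _ (hmu k) (hnu k)).
  have hW : supnorm (fun s => W s - Jstar s) <= a * e.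
    have := contr_iter ha0' hTc H.-1 (Vs k) Jstar.
    by rewrite hTfix.
  set eW := supnorm (fun s => W s - Jstar s).
  have hTW : Tm W = T W.
    rewrite /Tm /W hlook; rewrite -[in LHS](prednK hH) //.
  set D := supnorm (fun s => Tm W s - W s).
  have hD : D <= (1 + alpha) * eW.
    rewrite /D hTW; apply: le_trans (sn_tri _ Jstar _) _.
    have -> : supnorm (fun s => T W s - Jstar s) = supnorm (fun s => T W s - T Jstar s).
      by rewrite /T hJstar.
    rewrite mulrDl mul1r addrC lerD //; first by rewrite sn_sym.
  have hD0 : 0 <= D by apply: sn_ge0.
  have hit : forall j, supnorm (fun s => iter j Tm W s - W s) <= D / (1 - alpha).
    elim=> [|j IH] /=.
      by apply: sn_le; [rewrite divr_ge0 // ltW | move=> s; rewrite subrr normr0 divr_ge0 // ltW].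
    apply: le_trans (sn_tri _ (Tm W) _) _.
    have -> : D / (1 - alpha) = alpha * (D / (1 - alpha)) + D.
      by field; rewrite gt_eqF.
    apply: lerD => //.
    by apply: le_trans (hTm _ _) _; apply: ler_wpM2l.
  rewrite hV; apply: le_trans (sn_tri _ W _) _.
  apply: le_trans (lerD (hit m) (lexx eW)) _.
  have hDe : D / (1 - alpha) <= (1 + alpha) * (a * e) / (1 - alpha).
    apply: ler_wpM2r; first by rewrite invr_ge0 ltW.
    apply: le_trans hD _; apply: ler_wpM2l => //; by rewrite addr_ge0.
  apply: le_trans (lerD hDe hW) _.
  have he : 0 <= e by apply: sn_ge0.
  have -> : c * e = (1 + alpha) * (a * e) / (1 - alpha) + a * e
      + alpha ^+ m * (a / (1 - alpha)) * (1 + alpha) * e.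
    by rewrite /c; ring.
  by rewrite lerDl; apply: mulr_ge0 => //; apply: mulr_ge0; [exact: mulr_ge0 | apply: addr_ge0].
have part1 : forall k, supnorm (fun s => Vs k s - Jstar s)
     <= c ^+ k * supnorm (fun s => Vs 0%N s - Jstar s).
  elim=> [|k IH]; first by rewrite expr0 mul1r.
  apply: le_trans (step k) _; rewrite exprS -mulrA; exact: ler_wpM2l.
split=> // hlt; exists c; split=> //; rewrite hc /=.
apply: le_lt_trans hlt; rewrite /c lerD2l.
have hy : 0 <= (1 + alpha ^+ m) * (a / (1 - alpha)) by apply: mulr_ge0 => //; apply: addr_ge0.
have -> : 2 * (1 + alpha ^+ m) * (a / (1 - alpha)) = (1 + alpha ^+ m) * (a / (1 - alpha)) * 2 by ring.
by apply: ler_wpM2l => //; lra.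
Qed.
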